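(* The eventual equality relation $E_0$ on $2^\mathbb{N}$ is $\Delta^0_2$-graphable with diameter $2$.
   Context: $xE_0y$ iff there is $m$ with $x(n)=y(n)$ for all $n\ge m$. $E$ is $\Gamma$-graphable with diameter $k$ if there is a simple undirected graph $G$ in $\Gamma$ whose connectedness relation equals $E$ and $k$ is the least integer such that any two $G$-connected points are joined by a path of length at most $k$. *)

(* Defs.v *)
(* Cantor space 2^N as nat -> bool, with the product topology
   written out concretely via basic clopen cylinders. *)
From Stdlib Require Import Arith.

Definition cantor := nat -> bool.

Definition E0 (x y : cantor) : Prop :=
  exists m, forall n, m <= n -> x n = y n.

Definition rel2 := cantor -> cantor -> Prop.

Definition open2 (U : rel2) : Prop :=
  forall x y, U x y -> exists m, forall x' y',
    (forall n, n < m -> x' n = x n /\ y' n = y n) -> U x' y'.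

Definition closed2 (F : rel2) : Prop := open2 (fun x y => ~ F x y).

Definition Sigma02 (A : rel2) : Prop :=
  exists F : nat -> rel2, (forall i, closed2 (F i)) /\
    (forall x y, A x y <-> exists i, F i x y).

Definition Pi02 (A : rel2) : Prop := Sigma02 (fun x y => ~ A x y).

Definition Delta02 (A : rel2) : Prop := Sigma02 A /\ Pi02 A.

Definition simple_graph (G : rel2) : Prop :=
  (forall x, ~ G x x) /\ (forall x y, G x y -> G y x).

Fixpoint walk (G : rel2) (k : nat) (x y : cantor) : Prop :=
  match k with
  | 0 => x = y
  | S k' => exists z, G x z /\ walk G k' z y
  end.

Definition connected (G : rel2) (x y : cantor) : Prop := exists k, walk G k x y.

Definition diam_bound (G : rel2) (k : nat) : Prop :=
  forall x y, connected G x y -> exists j, j <= k /\ walk G j x y.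

Definition has_diameter (G : rel2) (k : nat) : Prop :=
  diam_bound G k /\ (forall k', diam_bound G k' -> k <= k').

Definition Delta02_graphable_diam (E : rel2) (k : nat) : Prop :=
  exists G : rel2, simple_graph G /\ Delta02 G /\
    (forall x y, connected G x y <-> E x y) /\ has_diameter G k.

(* Main.v *)
Require Import Defs.
From Stdlib Require Import Arith.
From Stdlib Require Import Lia Classical Bool.

Definition pairAt (x y : cantor) t := x t <> y t /\ x (S t) <> y (S t).
Definition firstPair (x y : cantor) t := pairAt x y t /\ forall s, s < t -> ~ pairAt x y s.
Definition Gr : rel2 := fun x y => exists t, firstPair x y t /\ forall n, S t < n -> x n = y n.

Lemma firstPair_dep x y x' y' m t : S (S t) <= m ->
  (forall n, n < m -> x' n = x n /\ y' n = y n) ->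
  (firstPair x' y' t <-> firstPair x y t).
Proof.
  intros Hm H.
  assert (Hp : forall s, s <= t -> (pairAt x' y' s <-> pairAt x y s)).
  { intros s Hs. unfold pairAt.
    destruct (H s) as [A B]; [lia|]. destruct (H (S s)) as [C D]; [lia|].
    rewrite A, B, C, D. tauto. }
  unfold firstPair. split; intros [P Q]; split.
  - apply Hp; auto.
  - intros s Hs. rewrite <- Hp by lia. auto.
  - apply Hp; auto.
  - intros s Hs. rewrite Hp by lia. auto.
Qed.

Lemma firstPair_uniq x y t t' : firstPair x y t -> firstPair x y t' -> t = t'.
Proof.
  intros [P Q] [P' Q']. destruct (lt_eq_lt_dec t t') as [[h|h]|h]; auto.
  - exfalso; exact (Q' t h P).
  - exfalso; exact (Q t' h P').
Qed.

Lemma first_exists x y s : pairAt x y s -> exists t, firstPair x y t.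
Proof.
  revert s. induction s as [s IH] using lt_wf_ind. intros Hs.
  destruct (classic (exists s', s' < s /\ pairAt x y s')) as [[s' [h1 h2]]|N].
  - exact (IH s' h1 h2).
  - exists s. split; auto. intros s' h1 h2. apply N. eauto.
Qed.

Lemma G_E0 x y : Gr x y -> E0 x y.
Proof. intros [t [_ H]]. exists (S (S t)). intros n Hn. apply H. lia. Qed.

Lemma E0_trans x y z : E0 x y -> E0 y z -> E0 x z.
Proof.
  intros [m1 H1] [m2 H2]. exists (m1 + m2). intros n Hn.
  rewrite H1 by lia. apply H2. lia.
Qed.

Lemma walk_E0 k x y : walk Gr k x y -> E0 x y.
Proof.
  revert x. induction k as [|k IH]; simpl; intros x H.
  - subst. exists 0. auto.
  - destruct H as [z [H1 H2]]. eapply E0_trans; [apply G_E0; eauto | eauto].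
Qed.

Lemma negb_neq b : negb b <> b.
Proof. destruct b; discriminate. Qed.

Lemma E0_walk2 x y : E0 x y -> walk Gr 2 x y.
Proof.
  intros [m Hm].
  set (K := S m).
  set (z := fun i => if (i =? K) || (i =? S K) then negb (x i)
                     else if (i <? m) && Nat.even i then y i else x i).
  assert (zK : z K = negb (x K)) by (unfold z; rewrite Nat.eqb_refl; reflexivity).
  assert (zSK : z (S K) = negb (x (S K))).
  { unfold z. rewrite (Nat.eqb_refl (S K)), orb_true_r. reflexivity. }
  assert (zbig : forall i, m <= i -> i <> K -> i <> S K -> z i = x i).
  { intros i h1 h2 h3. unfold z.
    apply Nat.eqb_neq in h2. apply Nat.eqb_neq in h3. rewrite h2, h3. simpl.
    replace (i <? m) with false by (symmetry; apply Nat.ltb_ge; lia). reflexivity. }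
  assert (zodd : forall i, i < m -> Nat.even i = false -> z i = x i).
  { intros i h1 h2. unfold z.
    replace (i =? K) with false by (symmetry; apply Nat.eqb_neq; unfold K; lia).
    replace (i =? S K) with false by (symmetry; apply Nat.eqb_neq; unfold K; lia).
    simpl. rewrite h2, andb_false_r. reflexivity. }
  assert (zeven : forall i, i < m -> Nat.even i = true -> z i = y i).
  { intros i h1 h2. unfold z.
    replace (i =? K) with false by (symmetry; apply Nat.eqb_neq; unfold K; lia).
    replace (i =? S K) with false by (symmetry; apply Nat.eqb_neq; unfold K; lia).
    simpl. rewrite h2. replace (i <? m) with true by (symmetry; apply Nat.ltb_lt; lia).
    reflexivity. }
  assert (ev : forall s, Nat.even s = false \/ Nat.even (S s) = false).
  { intros s. rewrite Nat.even_succ. unfold Nat.odd.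
    destruct (Nat.even s); auto. }
  simpl. exists z. split; [|exists y; split; [|reflexivity]].
  - exists K. split; [split|].
    + unfold pairAt. rewrite zK, zSK. split; intro h; symmetry in h; eapply negb_neq; eauto.
    + intros s Hs [P1 P2].
      destruct (Nat.lt_ge_cases (S s) m) as [h|h].
      * destruct (ev s) as [e|e].
        -- apply P1. rewrite zodd; auto; lia.
        -- apply P2. rewrite zodd; auto.
      * destruct (Nat.eq_dec (S s) m) as [e|e].
        -- apply P2. rewrite zbig; auto; unfold K in *; lia.
        -- apply P1. rewrite zbig; auto; unfold K in *; lia.
    + intros n Hn. rewrite zbig; auto; unfold K in *; lia.
  - exists K. split; [split|].
    + unfold pairAt. rewrite zK, zSK. rewrite (Hm K), (Hm (S K)) by (unfold K; lia).
      split; apply negb_neq.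
    + intros s Hs [P1 P2].
      destruct (Nat.lt_ge_cases (S s) m) as [h|h].
      * destruct (Bool.bool_dec (Nat.even s) true) as [e|e].
        -- apply P1. rewrite zeven; auto; lia.
        -- apply P2. rewrite zeven; auto. rewrite Nat.even_succ. unfold Nat.odd.
           apply not_true_is_false in e. rewrite e. reflexivity.
      * destruct (Nat.eq_dec (S s) m) as [e|e].
        -- apply P2. rewrite zbig by (unfold K in *; lia). apply Hm. lia.
        -- apply P1. rewrite zbig by (unfold K in *; lia). apply Hm. lia.
    + intros n Hn. rewrite zbig by (unfold K in *; lia). apply Hm. unfold K in *; lia.
Qed.

Lemma Gr_closed t : closed2 (fun x y => firstPair x y t /\ forall n, S t < n -> x n = y n).
Proof.
  intros x y HN.
  destruct (classic (firstPair x y t)) as [F|F].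
  - destruct (classic (exists n, S t < n /\ x n <> y n)) as [[n [h1 h2]]|N].
    + exists (S n). intros x' y' H [_ C]. apply h2.
      destruct (H n) as [A B]; [lia|]. rewrite <- A, <- B. apply C. lia.
    + exfalso. apply HN. split; auto. intros n h.
      destruct (classic (x n = y n)); auto. exfalso; eauto.
  - exists (S (S t)). intros x' y' H [F' _]. apply F.
    rewrite <- (firstPair_dep x y x' y' (S (S t)) t); auto.
Qed.

Definition H (i : nat) : rel2 :=
  match i with
  | 0 => fun x y => forall t, ~ pairAt x y t
  | S d => fun x y => exists t, S t < d /\ firstPair x y t /\ x d <> y d
  end.

Lemma H_closed i : closed2 (H i).
Proof.
  destruct i as [|d]; simpl; intros x y HN.
  - apply not_all_not_ex in HN. destruct HN as [t P].
    exists (S (S t)). intros x' y' Hxy N. apply (N t).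
    unfold pairAt in *. destruct (Hxy t) as [A B]; [lia|].
    destruct (Hxy (S t)) as [C D]; [lia|]. rewrite A, B, C, D. auto.
  - exists (S d). intros x' y' Hxy N. apply HN.
    destruct N as [t [h1 [h2 h3]]]. exists t. split; auto. split.
    + rewrite <- (firstPair_dep x y x' y' (S d) t); [auto|lia|auto].
    + destruct (Hxy d) as [A B]; [lia|]. rewrite <- A, <- B. auto.
Qed.

Lemma notG_iff x y : ~ Gr x y <-> exists i, H i x y.
Proof.
  split.
  - intros NG.
    destruct (classic (exists s, pairAt x y s)) as [[s P]|N].
    + destruct (first_exists x y s P) as [t F].
      destruct (classic (exists d, S t < d /\ x d <> y d)) as [[d [h1 h2]]|N].
      * exists (S d). simpl. exists t. auto.
      * exfalso. apply NG. exists t. split; auto. intros n h.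
        destruct (classic (x n = y n)); auto. exfalso; eauto.
    + exists 0. simpl. intros t P. eauto.
  - intros [[|d] Hi] [t [F C]]; simpl in Hi.
    + apply (Hi t). apply F.
    + destruct Hi as [t' [h1 [h2 h3]]].
      rewrite (firstPair_uniq x y t t' F h2) in C. apply h3. apply C. lia.
Qed.

Theorem proposition3p7 : Delta02_graphable_diam E0 2.
Proof.
  exists Gr. split; [|split; [|split]].
  - split.
    + intros x [t [[[P _] _] _]]. auto.
    + intros x y [t [[[P1 P2] Q] C]]. exists t. split; [split; [split|]|].
      * auto.
      * auto.
      * intros s hs [A B]. apply (Q s hs). split; auto.
      * intros n hn. symmetry. auto.
  - split.
    + exists (fun t x y => firstPair x y t /\ forall n, S t < n -> x n = y n).
      split; [exact Gr_closed|]. intros x y. reflexivity.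
    + exists H. split; [exact H_closed|]. intros x y. apply notG_iff.
  - intros x y. split.
    + intros [k W]. eapply walk_E0; eauto.
    + intros E. exists 2. apply E0_walk2; auto.
  - split.
    + intros x y [k W]. exists 2. split; auto. apply E0_walk2. eapply walk_E0; eauto.
    + intros k' D.
      destruct (le_lt_dec 2 k') as [h|h]; auto. exfalso.
      set (x0 := fun _ : nat => false). set (y0 := fun n => Nat.eqb n 0).
      assert (C : connected Gr x0 y0).
      { exists 2. apply E0_walk2. exists 1. intros n hn. unfold x0, y0.
        symmetry. apply Nat.eqb_neq. lia. }
      destruct (D x0 y0 C) as [j [hj W]].
      destruct j as [|[|j]]; [| |lia]; simpl in W.
      * assert (e : x0 0 = y0 0) by (rewrite W; reflexivity). discriminate e.
      * destruct W as [z [[t [[[_ P] _] _]] ->]]. apply P. reflexivity.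
Qed.
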